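(* Let $A \in \mathbb{R}^{2\times 2}$ be nonnegative and irreducible. Then $r(t) := r\big((1-t)A + tA^{\top}\big)$, the spectral radius (Perron–Frobenius eigenvalue) of $(1-t)A+tA^\top$, is concave over $t\in(0,1)$, and strictly concave when $A$ has different (i.e. non-collinear) left and right Perron–Frobenius eigenvectors.
   Context: $r(M)$ denotes the spectral radius of a square matrix $M$. *)

(* Defs.v *)
From HB Require Import structures.
From mathcomp Require Import all_boot all_order all_algebra.
From mathcomp Require Import complex.
Set Implicit Arguments. Unset Strict Implicit. Unset Printing Implicit Defensive.
Import Order.TTheory GRing.Theory Num.Theory.
Local Open Scope ring_scope.

Section Spectral.
Variable R : rcfType.

Definition complexify n (M : 'M[R]_n) : 'M[R[i]]_n :=
  map_mx (fun x : R => (x%:C)%C) M.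

(* the spectrum: the list of complex eigenvalues (with multiplicity), i.e. the
   roots of the characteristic polynomial, which splits over R[i] *)
Definition spectrum n (M : 'M[R]_n) : seq R[i] :=
  sval (closed_field_poly_normal (char_poly (complexify M))).

Definition spectral_radius n (M : 'M[R]_n) : R :=
  \big[Num.max/0]_(z <- spectrum M) ComplexField.Normc.normc z.

Definition nonneg_mx m n (A : 'M[R]_(m, n)) := forall i j, 0 <= A i j.
Definition pos_mx m n (A : 'M[R]_(m, n)) := forall i j, 0 < A i j.

(* irreducibility of a nonnegative matrix: its directed graph is strongly
   connected, i.e. for all i j some power A^k has a positive (i,j) entry *)
Definition irreducible_mx n (A : 'M[R]_n) :=
  forall i j, exists k : nat, 0 < (A ^+ k) i j.

Definition right_PF_vector n (A : 'M[R]_n) (u : 'cV[R]_n) :=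
  pos_mx u /\ A *m u = spectral_radius A *: u.
Definition left_PF_vector n (A : 'M[R]_n) (w : 'cV[R]_n) :=
  pos_mx w /\ w^T *m A = spectral_radius A *: w^T.

Definition collinear n (u w : 'cV[R]_n) := exists c : R, w = c *: u.

Definition r_path n (A : 'M[R]_n) (t : R) : R :=
  spectral_radius ((1 - t) *: A + t *: A^T).

Definition concave_on01 (f : R -> R) :=
  forall s t a, 0 < s < 1 -> 0 < t < 1 -> 0 <= a <= 1 ->
    a * f s + (1 - a) * f t <= f (a * s + (1 - a) * t).
Definition strictly_concave_on01 (f : R -> R) :=
  forall s t a, 0 < s < 1 -> 0 < t < 1 -> s != t -> 0 < a < 1 ->
    a * f s + (1 - a) * f t < f (a * s + (1 - a) * t).
End Spectral.

(* Main.v *)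
Require Import Defs.
From HB Require Import structures.
From mathcomp Require Import all_boot all_order all_algebra.
From mathcomp Require Import complex.
From mathcomp Require Import ring lra.
Import Order.TTheory GRing.Theory Num.Theory.
Local Open Scope complex_scope.
Local Open Scope ring_scope.
Lemma det2 (R : comNzRingType) (M : 'M[R]_2) :
  \det M = M 0 0 * M 1 1 - M 0 1 * M 1 0.
Proof.
rewrite (expand_det_row _ 0) !big_ord_recl big_ord0 /cofactor !det_mx11 !mxE /=.
rewrite addr0 expr0 expr1 !mul1r mulN1r mulrN.
by congr (M _ _ * M _ _ - M _ _ * M _ _); apply/val_inj.
Qed.

Lemma char_poly2 (R : comNzRingType) (M : 'M[R]_2) x :
  (char_poly M).[x] = (x - M 0 0) * (x - M 1 1) - M 0 1 * M 1 0.
Proof.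
rewrite /char_poly -horner_evalE -det_map_mx det2 !mxE /=.
rewrite !horner_evalE !hornerE /=.
by rewrite mulrNN.
Qed.

Lemma spec2 (R : rcfType) (M : 'M[R]_2) (l1 l2 : R) :
  l1 + l2 = M 0 0 + M 1 1 -> l1 * l2 = M 0 0 * M 1 1 - M 0 1 * M 1 0 ->
  perm_eq (spectrum M) [:: l1%:C; l2%:C]%C.
Proof.
move=> Hs Hp.
rewrite /spectrum; case: closed_field_poly_normal => s /= Ds.
have mon := char_poly_monic (complexify M).
move: Ds; rewrite (monicP mon) scale1r => Ds.
have sz := size_char_poly (complexify M).
rewrite Ds size_prod_XsubC in sz.
case: s Ds sz => [|z1 [|z2 []]] //= Ds _.
have E : forall x, (x - z1) * (x - z2) = (x - l1%:C) * (x - l2%:C).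
  move=> x; have := @char_poly2 _ (complexify M) x.
  rewrite Ds !big_cons big_nil !hornerE /= !mxE mulr1 => ->.
  have -> : (x - l1%:C) * (x - l2%:C) = x * x - (l1 + l2)%:C * x + (l1 * l2)%:C.
    rewrite rmorphD rmorphM /=; ring.
  rewrite Hs Hp rmorphD rmorphB rmorphM rmorphM /=; ring.
have := E l1%:C; rewrite subrr mul0r => /eqP; rewrite mulf_eq0 !subr_eq0.
case/orP => /eqP H.
  have := E (l1%:C + 1); rewrite -H addrAC subrr add0r !mul1r => /addrI /oppr_inj ->.
  by rewrite H.
have h1 : l1%:C + 1 - l1%:C = 1 by rewrite addrAC subrr add0r.
have := E (l1%:C + 1); rewrite -H h1 mulr1 mul1r => /addrI /oppr_inj ->.
rewrite H.
by rewrite perm_sym -(perm_rcons z2); exact: perm_refl.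
Qed.


Lemma normcC (R : rcfType) (x : R) : ComplexField.Normc.normc (x%:C)%C = `|x|.
Proof. by rewrite /= expr0n /= addr0 sqrtr_sqr. Qed.

Lemma srad2 (R : rcfType) (M : 'M[R]_2) :
  0 <= M 0 0 -> 0 <= M 1 1 -> 0 <= M 0 1 * M 1 0 ->
  spectral_radius M =
  (M 0 0 + M 1 1 + Num.sqrt ((M 0 0 - M 1 1) ^+ 2 + 4 * (M 0 1 * M 1 0))) / 2.
Proof.
move=> h0 h1 h2.
set D := (M 0 0 - M 1 1) ^+ 2 + 4 * (M 0 1 * M 1 0).
have hD : 0 <= D.
  rewrite /D; apply: addr_ge0; first exact: sqr_ge0.
  by apply: mulr_ge0.

set S := Num.sqrt D.
have hS : 0 <= S := sqrtr_ge0 _.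
have hSS : S ^+ 2 = D by rewrite sqr_sqrtr.
pose l1 := (M 0 0 + M 1 1 + S) / 2.
pose l2 := (M 0 0 + M 1 1 - S) / 2.
have P := @spec2 R M l1 l2.
have H1 : l1 + l2 = M 0 0 + M 1 1 by rewrite /l1 /l2; field.
have H2 : l1 * l2 = M 0 0 * M 1 1 - M 0 1 * M 1 0.
  rewrite /l1 /l2; apply/eqP; rewrite -subr_eq0; apply/eqP.
  have -> : (M 0 0 + M 1 1 + S) / 2 * ((M 0 0 + M 1 1 - S) / 2) -
    (M 0 0 * M 1 1 - M 0 1 * M 1 0) = (D - S ^+ 2) / 4 by rewrite /D; field.
  by rewrite hSS subrr mul0r.
have Hp := P H1 H2.
rewrite /spectral_radius (perm_big _ Hp) !big_cons big_nil !normcC.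
have e1 : `|l1| = l1 by apply/ger0_norm; rewrite /l1; lra.
have e2 : `|l2| <= l1 by rewrite ler_norml /l1 /l2; apply/andP; split; lra.
rewrite e1; change (Num.max l1 (Num.max `|l2| 0) = l1).
rewrite (max_idPl (normr_ge0 l2)).
exact/max_idPl.
Qed.

Lemma core {R : rcfType} {X Y Z al e : R} : 0 <= X -> 0 <= Y -> 0 <= Z ->
  0 <= al -> al <= 1 -> Z ^+ 2 = al * X ^+ 2 + (1 - al) * Y ^+ 2 + e ->
  (0 <= e -> al * X + (1 - al) * Y <= Z) /\ (0 < e -> al * X + (1 - al) * Y < Z).
Proof.
move=> hX hY hZ ha1 ha2 hE.
have hW : 0 <= al * X + (1 - al) * Y.
  by apply: addr_ge0; apply: mulr_ge0 => //; rewrite subr_ge0.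
have id : Z ^+ 2 - (al * X + (1 - al) * Y) ^+ 2 = al * (1 - al) * (X - Y) ^+ 2 + e.
  by rewrite hE; ring.
have hq : 0 <= al * (1 - al) * (X - Y) ^+ 2.
  by apply: mulr_ge0; [apply: mulr_ge0 => //; rewrite subr_ge0 | exact: sqr_ge0].
split=> he.
  rewrite -ler_sqr ?nnegrE // -subr_ge0 id; exact: addr_ge0.
rewrite -ltr_sqr ?nnegrE // -subr_gt0 id; exact: ltr_wpDl.
Qed.

Lemma rpathE (R : rcfType) (A : 'M[R]_2) t : nonneg_mx A -> 0 <= t -> t <= 1 ->
  r_path A t = (A 0 0 + A 1 1 + Num.sqrt ((A 0 0 - A 1 1) ^+ 2 +
    4 * (((1 - t) * A 0 1 + t * A 1 0) * ((1 - t) * A 1 0 + t * A 0 1)))) / 2.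
Proof.
move=> hA h0 h1.
have e : forall x : R, (1 - t) * x + t * x = x by move=> x; ring.
have h1' : 0 <= 1 - t by rewrite subr_ge0.
rewrite /r_path srad2 !mxE ?e //.
  apply: mulr_ge0; apply: addr_ge0; apply: mulr_ge0 => //.
Qed.

Lemma irr01 (R : rcfType) (A : 'M[R]_2) : irreducible_mx A -> A 0 1 != 0.
Proof.
move=> hI; apply/negP => /eqP h0.
have [k hk] := hI 0 1.
suff e : (A ^+ k) 0 1 = 0 by rewrite e ltxx in hk.
elim: k {hk} => [|k IH]; first by rewrite expr0 mxE.
rewrite exprSr -mulmxE mxE !big_ord_recl big_ord0.
have -> : lift ord0 ord0 = 1 :> 'I_2 by apply/val_inj.
by rewrite IH h0 !mulr0 mul0r !addr0.
Qed.

Definition Gf {R : rcfType} (a d b c x : R) :=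
  (a - d) ^+ 2 + 4 * (((1 - x) * b + x * c) * ((1 - x) * c + x * b)).

Lemma Gf_ge0 {R : rcfType} (a d b c x : R) : 0 <= b -> 0 <= c -> 0 <= x -> x <= 1 ->
  0 <= Gf a d b c x.
Proof.
move=> hb hc h0 h1; have h1' : 0 <= 1 - x by rewrite subr_ge0.
rewrite /Gf; apply: addr_ge0; first exact: sqr_ge0.
apply: mulr_ge0 => //; apply: mulr_ge0; apply: addr_ge0; exact: mulr_ge0.
Qed.

Lemma concave_core {R : rcfType} (a d b c s t al : R) : 0 <= b -> 0 <= c ->
  0 <= s -> s <= 1 -> 0 <= t -> t <= 1 -> 0 <= al -> al <= 1 ->
  (al * Num.sqrt (Gf a d b c s) + (1 - al) * Num.sqrt (Gf a d b c t)
     <= Num.sqrt (Gf a d b c (al * s + (1 - al) * t))) /\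
  (b != c -> s != t -> 0 < al -> al < 1 ->
   al * Num.sqrt (Gf a d b c s) + (1 - al) * Num.sqrt (Gf a d b c t)
     < Num.sqrt (Gf a d b c (al * s + (1 - al) * t))).
Proof.
move=> hb hc hs0 hs1 ht0 ht1 ha0 ha1.
have ha1' : 0 <= 1 - al by rewrite subr_ge0.
have hm0 : 0 <= al * s + (1 - al) * t by apply: addr_ge0; apply: mulr_ge0.
have hm1 : al * s + (1 - al) * t <= 1.
  rewrite -subr_ge0.
  have -> : 1 - (al * s + (1 - al) * t) = al * (1 - s) + (1 - al) * (1 - t) by ring.
  by apply: addr_ge0; apply: mulr_ge0 => //; rewrite subr_ge0.
set e := 4 * (b - c) ^+ 2 * (al * (1 - al)) * (s - t) ^+ 2.
have hE : Num.sqrt (Gf a d b c (al * s + (1 - al) * t)) ^+ 2 =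
  al * Num.sqrt (Gf a d b c s) ^+ 2 + (1 - al) * Num.sqrt (Gf a d b c t) ^+ 2 + e.
  by rewrite !sqr_sqrtr ?Gf_ge0 // /Gf /e; ring.
have [C1 C2] := core (sqrtr_ge0 _) (sqrtr_ge0 _) (sqrtr_ge0 _) ha0 ha1 hE.
split.
  apply: C1; rewrite /e; apply: mulr_ge0; last exact: sqr_ge0.
  by apply: mulr_ge0; [apply: mulr_ge0 => //; exact: sqr_ge0 | exact: mulr_ge0].
move=> hbc hst ha0' ha1''; apply: C2.
rewrite /e; apply: mulr_gt0; last by rewrite lt_def sqr_ge0 andbT sqrf_eq0 subr_eq0.
apply: mulr_gt0; last by apply: mulr_gt0 => //; rewrite subr_gt0.
by apply: mulr_gt0 => //; rewrite lt_def sqr_ge0 andbT sqrf_eq0 subr_eq0.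
Qed.

Lemma rpathG (R : rcfType) (A : 'M[R]_2) t : nonneg_mx A -> 0 <= t -> t <= 1 ->
  r_path A t = (A 0 0 + A 1 1 + Num.sqrt (Gf (A 0 0) (A 1 1) (A 0 1) (A 1 0) t)) / 2.
Proof. exact: rpathE. Qed.

Lemma l10 : lift ord0 ord0 = 1 :> 'I_2. Proof. by apply/val_inj. Qed.

Lemma coll (R : rcfType) (A : 'M[R]_2) u w : A 0 1 != 0 -> A 0 1 = A 1 0 ->
  right_PF_vector A u -> left_PF_vector A w -> collinear u w.
Proof.
move=> hb hbc [hu Au] [hw wA].
set r := spectral_radius A in Au wA.
have E1 := congr1 (fun M : 'M[R]_(2,1) => M 0 0) Au.
have E2 := congr1 (fun M : 'M[R]_(1,2) => M 0 0) wA.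
move: E1 E2 => /=; rewrite !mxE !big_ord_recl !big_ord0 !mxE l10 !addr0 -hbc => E1 E2.
have hu0 : u 0 0 != 0 by rewrite gt_eqF ?hu.
exists (w 0 0 / u 0 0).
apply/matrixP => i j; rewrite (ord1 j) !mxE.
case: i => [[|[|i]] Hi] //.
  have -> : Ordinal Hi = 0 by apply/val_inj.
  by rewrite divfK.
have -> : Ordinal Hi = 1 by apply/val_inj.
apply: (mulIf hu0); rewrite mulrAC divfK //.
apply: (mulfI hb).
have E1' := congr1 (fun x => x * w 0 0) E1.
have E2' := congr1 (fun x => x * u 0 0) E2.
move: E1' E2' => /= E3 E4.
change (ord0 : 'I_2) with (0 : 'I_2) in E3.
change (ord0 : 'I_2) with (0 : 'I_2) in E4.
lra.
Qed.

Theorem theorem1 (R : rcfType) (A : 'M[R]_2) :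
  nonneg_mx A -> irreducible_mx A ->
  concave_on01 (r_path A) /\
  ((exists u w : 'cV[R]_2,
      right_PF_vector A u /\ left_PF_vector A w /\ ~ collinear u w) ->
   strictly_concave_on01 (r_path A)).
Proof.
move=> hA hI.
have hb := hA 0 1; have hc := hA 1 0.
have hm : forall s t al : R, 0 <= s -> s <= 1 -> 0 <= t -> t <= 1 -> 0 <= al -> al <= 1 ->
  0 <= al * s + (1 - al) * t /\ al * s + (1 - al) * t <= 1.
  move=> s t al hs0 hs1 ht0 ht1 ha0 ha1.
  have ha1' : 0 <= 1 - al by rewrite subr_ge0.
  split; first by apply: addr_ge0; apply: mulr_ge0.
  rewrite -subr_ge0.
  have -> : 1 - (al * s + (1 - al) * t) = al * (1 - s) + (1 - al) * (1 - t) by ring.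
  by apply: addr_ge0; apply: mulr_ge0 => //; rewrite subr_ge0.
split.
  move=> s t al /andP[hs0 hs1] /andP[ht0 ht1] /andP[ha0 ha1].
  have [hm0 hm1] := hm s t al (ltW hs0) (ltW hs1) (ltW ht0) (ltW ht1) ha0 ha1.
  rewrite (@rpathG R A s hA (ltW hs0) (ltW hs1)) (@rpathG R A t hA (ltW ht0) (ltW ht1)) (@rpathG R A _ hA hm0 hm1).
  have [C _] := concave_core (A 0 0) (A 1 1) (A 0 1) (A 1 0) s t al hb hc (ltW hs0) (ltW hs1) (ltW ht0) (ltW ht1) ha0 ha1.
  lra.
move=> [u [w [hu [hw hnc]]]].
have hbc : A 0 1 != A 1 0.
  apply/negP => /eqP hbc; apply: hnc; exact: (@coll R A u w (@irr01 R A hI) hbc hu hw).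
move=> s t al /andP[hs0 hs1] /andP[ht0 ht1] hst /andP[ha0 ha1].
have [hm0 hm1] := hm s t al (ltW hs0) (ltW hs1) (ltW ht0) (ltW ht1) (ltW ha0) (ltW ha1).
rewrite (@rpathG R A s hA (ltW hs0) (ltW hs1)) (@rpathG R A t hA (ltW ht0) (ltW ht1)) (@rpathG R A _ hA hm0 hm1).
have [_ C] := concave_core (A 0 0) (A 1 1) (A 0 1) (A 1 0) s t al hb hc (ltW hs0) (ltW hs1) (ltW ht0) (ltW ht1) (ltW ha0) (ltW ha1).
have := C hbc hst ha0 ha1.
lra.
Qed.
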